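(* Under the Setting, Algorithm and Strong convexity assumption in the context (with $a_k\in(0,1]$, $A_k>0$), suppose $$\min_{\{\mathcal A\subset I:\,|\mathcal A|=\lceil (N-s+1)/2\rceil\}}\sum_{k\in\mathcal A}\rho_k\eta_k>\frac{(1-a_s)D_{\mathcal X}^2}{A_s}+\frac12\sum_{k\in\mathcal B}\rho_k\gamma_kL_f^2+\frac12\sum_{k\in\mathcal N}\rho_k\gamma_kL_{g,\mathcal X}^2.$$ Then $\mathcal B\neq\emptyset$, and either (i) $|\mathcal B|\ge(N-s+1)/2$ or (ii) $\sum_{k\in\mathcal B}\rho_k(f(x_k)-f(x^* ))<0$.
   Context: Setting. $\mathcal X\subset\mathbb R^n$ is convex and compact; $f:\mathcal X\to\mathbb R$ is convex and $L_f$-Lipschitz; $\Delta\subset\mathbb R^d$ is compact; $g:\mathcal X\times\Delta\to\mathbb R$ is such that for every $\delta\in\Delta$, $x\mapsto g(x,\delta)$ is convex and $L_{g,\mathcal X}$-Lipschitz, and for every $x\in\mathcal X$, $\delta\mapsto g(x,\delta)$ is $L_{g,\Delta}$-Lipschitz. Let $G(x):=\max_{\delta\in\Delta}g(x,\delta)$ and assume the problem $\min_{x\in\mathcal X}\{f(x):G(x)\le0\}$ has an optimal solution $x^*$. Norms are Euclidean. $f'(x)$ denotes a subgradient of $f$ at $x$ and $g'(x,\delta)$ a subgradient of $g(\cdot,\delta)$ at $x$. Let $\omega_{\mathcal X}:\mathcal X\to\mathbb R$ be continuously differentiable and $1$-strongly convex; $V(x,z):=\omega_{\mathcal X}(z)-\omega_{\mathcal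 X}(x)-\langle\nabla\omega_{\mathcal X}(x),z-x\rangle$; prox-mapping $P_{x,\mathcal X}(y):=\arg\min_{z\in\mathcal X}\{\langle y,z\rangle+V(x,z)\}$; $D_{\mathcal X}:=\sqrt{\max_{x,z\in\mathcal X}V(x,z)}$. Algorithm (inexact CSA). Inputs: $N\ge1$, $x_1\in\mathcal X$, tolerances $\eta_k>0$, step-sizes $\gamma_k>0$. For $k=1,\dots,N$: choose some $\delta_k\in\Delta$ (an approximate maximizer of $g(x_k,\cdot)$); set $h_k=f'(x_k)$ if $g(x_k,\delta_k)\le\eta_k$ and $h_k=g'(x_k,\delta_k)$ otherwise; set $x_{k+1}=P_{x_k,\mathcal X}(\gamma_kh_k)$. For $1\le s\le N$ let $I=\{s,\dots,N\}$, $\mathcal B:=\{k\in I: g(x_k,\delta_k)\le\eta_k\}$, $\mathcal N:=I\setminus\mathcal B$. Strong convexity assumption: $f$ is strongly convex with parameter $\mu_f>0$ (i.e. $f(x)\ge f(z)+\langle f'(z),x-z\rangle+\frac{\mu_f}{2}\|x-z\|^2$), each $g(\cdot,\delta)$ is strongly convex with parameter $\mu_g>0$ uniformly in $\delta$, and there is $L>0$ with $V(x,z)\le\frac L2\|x-z\|^2$ for all $x,z\in\mathcal X$. Define $a_k=\mu_f\gamma_k/L$ if $g(x_k,\delta_k)\le\eta_k$ and $a_k=\mu_g\gamma_k/L$ otherwise; $A_1=1$, $A_k=(1-a_k)A_{k-1}$ for $k\ge2$; $\rho_k=\gamma_k/A_k$. *)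

(* Defs.v *)
From Stdlib Require Import Reals Lra List.
Open Scope R_scope.

(* Points of R^n are represented as functions nat -> R; a point "lies in R^n"
   when all coordinates of index >= n vanish.  Inner product / norm use the
   first n coordinates (Euclidean). *)
Definition vec := nat -> R.
Definition vsub (x y : vec) : vec := fun i => x i - y i.
Definition vscale (c : R) (x : vec) : vec := fun i => c * x i.
Definition vcomb (t : R) (x y : vec) : vec := fun i => t * x i + (1 - t) * y i.
Definition inner (n : nat) (x y : vec) : R :=
  fold_right (fun i acc => x i * y i + acc) 0 (seq 0 n).
Definition vnorm (n : nat) (x : vec) : R := sqrt (inner n x x).
Definition inRn (n : nat) (x : vec) : Prop := forall i, (n <= i)%nat -> x i = 0.

Definition convex_set (S : vec -> Prop) : Prop :=
  forall x y t, S x -> S y -> 0 <= t <= 1 -> S (vcomb t x y).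
Definition bounded_set (n : nat) (S : vec -> Prop) : Prop :=
  exists M, forall x, S x -> vnorm n x <= M.
Definition closed_set (n : nat) (S : vec -> Prop) : Prop :=
  forall (u : nat -> vec) (y : vec), (forall k, S (u k)) -> inRn n y ->
    Un_cv (fun k => vnorm n (vsub (u k) y)) 0 -> S y.
Definition compact_set (n : nat) (S : vec -> Prop) : Prop :=
  (forall x, S x -> inRn n x) /\ bounded_set n S /\ closed_set n S.

Definition convex_on (S : vec -> Prop) (F : vec -> R) : Prop :=
  forall x y t, S x -> S y -> 0 <= t <= 1 ->
    F (vcomb t x y) <= t * F x + (1 - t) * F y.
Definition lipschitz_on (n : nat) (S : vec -> Prop) (F : vec -> R) (Lc : R) : Prop :=
  forall x y, S x -> S y -> Rabs (F x - F y) <= Lc * vnorm n (vsub x y).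
Definition strongly_convex_on (n : nat) (S : vec -> Prop) (F : vec -> R) (mu : R) : Prop :=
  forall x y t, S x -> S y -> 0 <= t <= 1 ->
    F (vcomb t x y) <= t * F x + (1 - t) * F y
                        - mu / 2 * t * (1 - t) * (vnorm n (vsub x y)) ^ 2.
Definition is_subgrad (n : nat) (S : vec -> Prop) (F : vec -> R) (x h : vec) : Prop :=
  forall z, S z -> F z >= F x + inner n h (vsub z x).
Definition has_gradient_at (n : nat) (F : vec -> R) (gF : vec -> vec) (x : vec) : Prop :=
  forall eps, eps > 0 -> exists del, del > 0 /\
    forall y, inRn n y -> vnorm n (vsub y x) < del ->
      Rabs (F y - F x - inner n (gF x) (vsub y x)) <= eps * vnorm n (vsub y x).
Definition continuous_map_on (n : nat) (S : vec -> Prop) (G : vec -> vec) : Prop :=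
  forall x eps, S x -> eps > 0 -> exists del, del > 0 /\
    forall y, S y -> vnorm n (vsub y x) < del -> vnorm n (vsub (G y) (G x)) < eps.

Definition bregman (n : nat) (omega : vec -> R) (gomega : vec -> vec) (x z : vec) : R :=
  omega z - omega x - inner n (gomega x) (vsub z x).
Definition is_prox (n : nat) (X : vec -> Prop) (omega : vec -> R) (gomega : vec -> vec)
    (x y z : vec) : Prop :=
  X z /\ forall w, X w ->
    inner n y z + bregman n omega gomega x z <= inner n y w + bregman n omega gomega x w.

Definition Rleb (a b : R) : bool := if Rle_dec a b then true else false.
Definition lsum (F : nat -> R) (l : list nat) : R := fold_right (fun k acc => F k + acc) 0 l.
(* A_1 = 1, A_k = (1 - a_k) A_{k-1} for k >= 2 (A_0 unused) *)
Fixpoint Aseq (a : nat -> R) (k : nat) : R :=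
  match k with
  | O => 1
  | S O => 1
  | S k' => (1 - a k) * Aseq a k'
  end.

(* Main.v *)
Require Import Defs.
From Stdlib Require Import Reals List Lia Lra FunctionalExtensionality.
Open Scope R_scope.


Definition innerL (l : list nat) (x y : vec) : R :=
  fold_right (fun i acc => x i * y i + acc) 0 l.
Lemma inner_L n x y : inner n x y = innerL (seq 0 n) x y.
Proof. reflexivity. Qed.

Lemma innerL_sub_r l x y z : innerL l x (vsub y z) = innerL l x y - innerL l x z.
Proof. induction l; simpl; [lra|]. rewrite IHl. unfold vsub. ring. Qed.
Lemma innerL_sub_l l x y z : innerL l (vsub y z) x = innerL l y x - innerL l z x.
Proof. induction l; simpl; [lra|]. rewrite IHl. unfold vsub. ring. Qed.
Lemma innerL_scal_r l x y c : innerL l x (vscale c y) = c * innerL l x y.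
Proof. induction l; simpl; [lra|]. rewrite IHl. unfold vscale. ring. Qed.
Lemma innerL_scal_l l x y c : innerL l (vscale c y) x = c * innerL l y x.
Proof. induction l; simpl; [lra|]. rewrite IHl. unfold vscale. ring. Qed.
Lemma innerL_sym l x y : innerL l x y = innerL l y x.
Proof. induction l; simpl; [lra|]. rewrite IHl. ring. Qed.
Lemma innerL_pos l x : 0 <= innerL l x x.
Proof. induction l; simpl; [lra|]. nra. Qed.
Lemma innerL_subsym l x y : innerL l (vsub x y) (vsub x y) = innerL l (vsub y x) (vsub y x).
Proof. induction l; simpl; [lra|]. rewrite IHl. unfold vsub. ring. Qed.
Lemma innerL_ext_in l x y x' y' : (forall i, In i l -> x i * y i = x' i * y' i) ->
  innerL l x y = innerL l x' y'.
Proof. induction l; simpl; intros H; [lra|]. rewrite H by auto. rewrite IHl; auto. Qed.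

Lemma inner_sub_r n x y z : inner n x (vsub y z) = inner n x y - inner n x z.
Proof. apply innerL_sub_r. Qed.
Lemma inner_sub_l n x y z : inner n (vsub y z) x = inner n y x - inner n z x.
Proof. apply innerL_sub_l. Qed.
Lemma inner_scal_r n x y c : inner n x (vscale c y) = c * inner n x y.
Proof. apply innerL_scal_r. Qed.
Lemma inner_scal_l n x y c : inner n (vscale c y) x = c * inner n y x.
Proof. apply innerL_scal_l. Qed.
Lemma inner_sym n x y : inner n x y = inner n y x.
Proof. apply innerL_sym. Qed.
Lemma inner_pos n x : 0 <= inner n x x.
Proof. apply innerL_pos. Qed.
Lemma inner_subsym n x y : inner n (vsub x y) (vsub x y) = inner n (vsub y x) (vsub y x).
Proof. apply innerL_subsym. Qed.

Lemma vnorm_sq n v : vnorm n v ^ 2 = inner n v v.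
Proof. unfold vnorm. apply pow2_sqrt, inner_pos. Qed.
Lemma vnorm_pos n v : 0 <= vnorm n v.
Proof. apply sqrt_pos. Qed.
Lemma vnorm_scal n c v : 0 <= c -> vnorm n (vscale c v) = c * vnorm n v.
Proof. intros Hc. unfold vnorm. rewrite inner_scal_l, inner_scal_r, <- Rmult_assoc.
  rewrite sqrt_mult_alt by nra. rewrite sqrt_square by lra. reflexivity. Qed.
Lemma vnorm_subsym n x y : vnorm n (vsub x y) = vnorm n (vsub y x).
Proof. unfold vnorm. rewrite inner_subsym. reflexivity. Qed.

Lemma vcomb_sub t z x : vsub (vcomb t z x) x = vscale t (vsub z x).
Proof. apply functional_extensionality; intro i. unfold vsub, vcomb, vscale. ring. Qed.

Lemma grad_dir n X om gom x z :
  (forall y, X y -> inRn n y) -> convex_set X -> X x -> X z -> has_gradient_at n om gom x ->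
  forall eps tau, eps > 0 -> tau > 0 -> exists t, 0 < t <= 1 /\ t <= tau /\
   Rabs (om (vcomb t z x) - om x - t * inner n (gom x) (vsub z x)) <= eps * t * vnorm n (vsub z x).
Proof.
  intros Hin Hc Hx Hz Hg eps tau He Ht.
  destruct (Hg eps He) as [del [Hd Hdel]].
  set (r := vnorm n (vsub z x)).
  assert (Hr : 0 <= r) by apply vnorm_pos.
  set (t := Rmin 1 (Rmin tau (del / (r + 1)))).
  assert (Hq : del / (r+1) > 0) by (apply Rdiv_lt_0_compat; lra).
  assert (Ht1 : t <= 1) by apply Rmin_l.
  assert (Ht2 : t <= tau) by (eapply Rle_trans; [apply Rmin_r|apply Rmin_l]).
  assert (Ht3 : t <= del/(r+1)) by (eapply Rle_trans; [apply Rmin_r|apply Rmin_r]).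
  assert (Ht0 : 0 < t) by (unfold t; repeat apply Rmin_pos; lra).
  exists t. split; [lra|]. split; [lra|].
  assert (HXc : X (vcomb t z x)) by (apply Hc; auto; lra).
  assert (Hlt : t * r < del).
  { assert (del / (r+1) * (r+1) = del) by (field; lra).
    assert (t * r <= del/(r+1) * r) by (apply Rmult_le_compat_r; lra). nra. }
  specialize (Hdel (vcomb t z x) (Hin _ HXc)).
  rewrite vcomb_sub, vnorm_scal in Hdel by lra.
  rewrite inner_scal_r in Hdel. fold r in Hdel |- *.
  replace (eps * t * r) with (eps * (t * r)) by ring. apply Hdel. lra.
Qed.
Lemma Rabs_def2b a b : Rabs a <= b -> -b <= a <= b.
Proof. unfold Rabs; destruct (Rcase_abs a); lra. Qed.

Lemma breg_sc n X om gom x z :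
  (forall y, X y -> inRn n y) -> convex_set X -> strongly_convex_on n X om 1 ->
  X x -> X z -> has_gradient_at n om gom x ->
  bregman n om gom x z >= 1/2 * inner n (vsub z x) (vsub z x).
Proof.
  intros Hin Hc Hsc Hx Hz Hg.
  set (r := vnorm n (vsub z x)).
  assert (Hr : 0 <= r) by apply vnorm_pos.
  rewrite <- vnorm_sq. fold r.
  set (V := bregman n om gom x z).
  destruct (Rle_lt_dec (1/2 * r^2) V) as [Hle|Hlt]; [lra|exfalso].
  set (d0 := 1/2*r^2 - V).
  assert (Hd0 : d0 > 0) by (unfold d0; lra).
  set (eps := d0 / (2*(r+1))). set (tau := d0/(r*r+1)).
  assert (He : eps > 0) by (apply Rdiv_lt_0_compat; lra).
  assert (Hta : tau > 0) by (apply Rdiv_lt_0_compat; nra).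
  destruct (grad_dir n X om gom x z Hin Hc Hx Hz Hg eps tau He Hta) as [t [Ht [Htt Hab]]].
  fold r in Hab.
  pose proof (Hsc z x t Hz Hx ltac:(lra)) as Hs. fold r in Hs.
  apply Rabs_def2b in Hab.
  assert (HV : V = om z - om x - inner n (gom x) (vsub z x)) by reflexivity.
  assert (Hk : t * V >= t * (1/2*(1-t)*r^2 - eps * r)) by nra.
  assert (Hk2 : V >= 1/2*(1-t)*r^2 - eps*r).
  { apply Rle_ge. apply (Rmult_le_reg_l t); lra. }
  assert (E1 : eps * (2*(r+1)) = d0) by (unfold eps; field; lra).
  assert (E2 : tau * (r*r+1) = d0) by (unfold tau; field; nra).
  assert (t * r^2 <= tau * r^2) by (apply Rmult_le_compat_r; nra).
  unfold d0 in *. nra.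
Qed.

Lemma prox_opt n X om gom x y z w :
  (forall y, X y -> inRn n y) -> convex_set X ->
  is_prox n X om gom x y z -> has_gradient_at n om gom z -> X w ->
  inner n y (vsub w z) + inner n (gom z) (vsub w z) - inner n (gom x) (vsub w z) >= 0.
Proof.
  intros Hin Hc [Hz Hp] Hg Hw.
  set (D := inner n y (vsub w z) + inner n (gom z) (vsub w z) - inner n (gom x) (vsub w z)).
  destruct (Rle_lt_dec 0 D) as [Hle|Hlt]; [lra|exfalso].
  set (r := vnorm n (vsub w z)).
  assert (Hr : 0 <= r) by apply vnorm_pos.
  set (eps := - D / (2*(r+1))).
  assert (He : eps > 0) by (apply Rdiv_lt_0_compat; lra).
  destruct (grad_dir n X om gom z w Hin Hc Hz Hw Hg eps 1 He ltac:(lra)) as [t [Ht [_ Hab]]].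
  fold r in Hab. apply Rabs_def2b in Hab.
  set (u := vcomb t w z).
  assert (Hu : X u) by (apply Hc; auto; lra).
  specialize (Hp u Hu). unfold bregman in Hp.
  assert (Hs : vsub u z = vscale t (vsub w z)) by apply vcomb_sub.
  assert (A1 : inner n y u - inner n y z = t * inner n y (vsub w z)).
  { rewrite <- inner_sub_r, Hs, inner_scal_r. reflexivity. }
  assert (A2 : inner n (gom x) u - inner n (gom x) z = t * inner n (gom x) (vsub w z)).
  { rewrite <- inner_sub_r, Hs, inner_scal_r. reflexivity. }
  rewrite !inner_sub_r in Hp.
  assert (E1 : eps * (2*(r+1)) = -D) by (unfold eps; field; lra).
  assert (Hk : 0 <= t * (D + eps * r)).
  { unfold D. fold u in Hab. nra. }
  assert (D + eps * r < 0) by nra.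
  nra.
Qed.

Lemma step n X om gom xk y z w :
  (forall y, X y -> inRn n y) -> convex_set X -> strongly_convex_on n X om 1 ->
  (forall y, X y -> has_gradient_at n om gom y) ->
  X xk -> X w -> is_prox n X om gom xk y z ->
  inner n y (vsub xk w) <= 1/2 * inner n y y + bregman n om gom xk w - bregman n om gom z w.
Proof.
  intros Hin Hc Hsc Hg Hx Hw Hp.
  assert (Hz : X z) by apply Hp.
  pose proof (prox_opt n X om gom xk y z w Hin Hc Hp (Hg z Hz) Hw) as Ho.
  pose proof (breg_sc n X om gom xk z Hin Hc Hsc Hx Hz (Hg xk Hx)) as Hb.
  unfold bregman in *.
  pose proof (inner_pos n (vsub y (vsub xk z))) as Hq.
  rewrite !inner_sub_l, !inner_sub_r in Hq.
  repeat rewrite inner_sub_r in Ho. repeat rewrite inner_sub_r.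
  repeat rewrite inner_sub_r in Hb. repeat rewrite inner_sub_l in Hb.
  rewrite (inner_sym n xk y), (inner_sym n z y), (inner_sym n z xk) in Hq.
  rewrite (inner_sym n z xk) in Hb.
  lra.
Qed.

Lemma subgrad_bound n F y hv Lc :
  inRn n y -> is_subgrad n (inRn n) F y hv -> lipschitz_on n (inRn n) F Lc ->
  inner n hv hv <= Lc ^ 2.
Proof.
  intros Hy Hs Hl.
  set (u := fun i => if Nat.ltb i n then hv i else 0).
  set (zz := fun i => y i + u i).
  assert (Hz : inRn n zz).
  { intros i Hi. unfold zz, u. rewrite Hy by auto.
    destruct (Nat.ltb_spec i n); [lia|ring]. }
  assert (Hzy : vsub zz y = u).
  { apply functional_extensionality; intro i. unfold vsub, zz. ring. }
  assert (Hu1 : inner n hv u = inner n hv hv).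
  { rewrite !inner_L. apply innerL_ext_in. intros i Hi. apply in_seq in Hi.
    unfold u. destruct (Nat.ltb_spec i n); [reflexivity|lia]. }
  assert (Hu2 : inner n u u = inner n hv hv).
  { rewrite !inner_L. apply innerL_ext_in. intros i Hi. apply in_seq in Hi.
    unfold u. destruct (Nat.ltb_spec i n); [reflexivity|lia]. }
  specialize (Hs zz Hz). rewrite Hzy, Hu1 in Hs.
  specialize (Hl zz y Hz Hy). rewrite Hzy in Hl. unfold vnorm in Hl. rewrite Hu2 in Hl.
  apply Rabs_def2b in Hl.
  set (q := inner n hv hv) in *.
  assert (Hq : 0 <= q) by apply inner_pos.
  set (rr := sqrt q) in *.
  assert (Hrr : q = rr * rr) by (unfold rr; rewrite sqrt_sqrt; auto).
  assert (0 <= rr) by apply sqrt_pos.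
  assert (rr * rr <= Lc * rr) by lra.
  destruct (Rle_lt_dec rr 0).
  - assert (rr = 0) by lra. nra.
  - assert (rr <= Lc) by nra. nra.
Qed.

Lemma lsum_app F l1 l2 : lsum F (l1 ++ l2) = lsum F l1 + lsum F l2.
Proof. induction l1; simpl; [lra|]. rewrite IHl1. ring. Qed.
Lemma lsum_scal c F l : lsum (fun k => c * F k) l = c * lsum F l.
Proof. induction l; simpl; [lra|]. rewrite IHl. ring. Qed.
Lemma lsum_nonneg F l : (forall k, In k l -> 0 <= F k) -> 0 <= lsum F l.
Proof. induction l; simpl; intros H; [lra|]. pose proof (H a (or_introl eq_refl)).
  assert (0 <= lsum F l) by (apply IHl; auto). lra. Qed.
Lemma lsum_split (p : nat -> bool) F l :
  lsum F l = lsum F (filter p l) + lsum F (filter (fun k => negb (p k)) l).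
Proof. induction l; simpl; [lra|]. destruct (p a); simpl; rewrite IHl; ring. Qed.
Lemma lsum_filter_ext (p : nat -> bool) F G l : (forall k, p k = true -> F k = G k) ->
  lsum F (filter p l) = lsum G (filter p l).
Proof. intros H; induction l; simpl; [lra|]. destruct (p a) eqn:E; simpl; rewrite IHl; auto.
  rewrite H; auto. Qed.

Lemma lsum_one F a : lsum F (a :: nil) = F a.
Proof. simpl. ring. Qed.

Lemma tele (T Q W : nat -> R) Z s m : T s <= Z - W s + Q s ->
  (forall k, (s < k <= s + m)%nat -> T k <= W (k-1)%nat - W k + Q k) ->
  lsum T (seq s (S m)) <= Z - W (s+m)%nat + lsum Q (seq s (S m)).
Proof.
  intros H0 Hk. induction m.
  - simpl. rewrite Nat.add_0_r. lra.
  - rewrite seq_S, !lsum_app, !lsum_one.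
    assert (IH : lsum T (seq s (S m)) <= Z - W (s + m)%nat + lsum Q (seq s (S m)))
      by (apply IHm; intros; apply Hk; lia).
    specialize (Hk (s + S m)%nat ltac:(lia)).
    replace (s + S m - 1)%nat with (s + m)%nat in Hk by lia.
    lra.
Qed.

Lemma Aseq_S a k : (1 <= k)%nat -> Aseq a (S k) = (1 - a (S k)) * Aseq a k.
Proof. destruct k; [lia|reflexivity]. Qed.

Lemma Rleb_true a b : Rleb a b = true -> a <= b.
Proof. unfold Rleb. destruct (Rle_dec a b); auto; discriminate. Qed.
Lemma Rleb_false a b : Rleb a b = false -> a > b.
Proof. unfold Rleb. destruct (Rle_dec a b); [discriminate|]. intros _. lra. Qed.

Lemma NoDup_firstn' (l : list nat) c : NoDup l -> NoDup (firstn c l).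
Proof. intros H. rewrite <- (firstn_skipn c l) in H. eapply NoDup_app_remove_r; eauto. Qed.
Lemma In_firstn' (l : list nat) c k : In k (firstn c l) -> In k l.
Proof. intros H. rewrite <- (firstn_skipn c l). apply in_or_app; auto. Qed.
Lemma In_skipn' (l : list nat) c k : In k (skipn c l) -> In k l.
Proof. intros H. rewrite <- (firstn_skipn c l). apply in_or_app; auto. Qed.
Theorem mainTheorem19
  (n d : nat) (X Delta : vec -> Prop) (f : vec -> R) (g : vec -> vec -> R)
  (Lf LgX LgD : R) (fsub : vec -> vec) (gsub : vec -> vec -> vec) (xstar : vec)
  (omega : vec -> R) (gomega : vec -> vec) (MV DX : R)
  (N s : nat) (x dl : nat -> vec) (eta gam : nat -> R) (mu_f mu_g L : R) :
  (* Setting *)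
  convex_set X -> compact_set n X ->
  convex_on (inRn n) f -> lipschitz_on n (inRn n) f Lf ->
  compact_set d Delta ->
  (forall dd, Delta dd -> convex_on (inRn n) (fun y => g y dd)) ->
  (forall dd, Delta dd -> lipschitz_on n (inRn n) (fun y => g y dd) LgX) ->
  (forall y, X y -> lipschitz_on d Delta (fun dd => g y dd) LgD) ->
  (* x* is an optimal solution of min { f(x) : x in X, G(x) = max_delta g(x,delta) <= 0 } *)
  X xstar -> (forall dd, Delta dd -> g xstar dd <= 0) ->
  (forall y, X y -> (forall dd, Delta dd -> g y dd <= 0) -> f xstar <= f y) ->
  (* subgradients f'(x), g'(x,delta) *)
  (forall y, X y -> is_subgrad n (inRn n) f y (fsub y)) ->
  (forall y dd, X y -> Delta dd -> is_subgrad n (inRn n) (fun z => g z dd) y (gsub y dd)) ->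
  (* distance generating function omega *)
  (forall y, X y -> has_gradient_at n omega gomega y) ->
  continuous_map_on n X gomega ->
  strongly_convex_on n X omega 1 ->
  (* D_X = sqrt (max_{x,z in X} V(x,z)) *)
  (forall y z, X y -> X z -> bregman n omega gomega y z <= MV) ->
  (exists y z, X y /\ X z /\ bregman n omega gomega y z = MV) ->
  DX = sqrt MV ->
  let test k := Rleb (g (x k) (dl k)) (eta k) in
  let h k := if test k then fsub (x k) else gsub (x k) (dl k) in
  (* Algorithm (inexact CSA) *)
  (1 <= N)%nat -> X (x 1%nat) ->
  (forall k, (1 <= k <= N)%nat ->
     Delta (dl k) /\ eta k > 0 /\ gam k > 0 /\
     is_prox n X omega gomega (x k) (vscale (gam k) (h k)) (x (S k))) ->
  (* Strong convexity assumption *)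
  mu_f > 0 -> mu_g > 0 -> L > 0 ->
  (forall y z, X y -> X z ->
     f y >= f z + inner n (fsub z) (vsub y z) + mu_f / 2 * (vnorm n (vsub y z)) ^ 2) ->
  (forall dd y z, Delta dd -> X y -> X z ->
     g y dd >= g z dd + inner n (gsub z dd) (vsub y z) + mu_g / 2 * (vnorm n (vsub y z)) ^ 2) ->
  (forall y z, X y -> X z -> bregman n omega gomega y z <= L / 2 * (vnorm n (vsub y z)) ^ 2) ->
  let a k := if test k then mu_f * gam k / L else mu_g * gam k / L in
  let A := Aseq a in
  let rho k := gam k / A k in
  (forall k, (1 <= k <= N)%nat -> 0 < a k <= 1 /\ A k > 0) ->
  (* the index sets *)
  (1 <= s <= N)%nat ->
  let I := seq s (N - s + 1) in
  let B := filter test I in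
  let NN := filter (fun k => negb (test k)) I in
  (* min over subsets of I of size ceil((N-s+1)/2) exceeds the bound *)
  (forall Asub : list nat, NoDup Asub -> incl Asub I ->
     length Asub = Nat.div (N - s + 2) 2 ->
     lsum (fun k => rho k * eta k) Asub >
       (1 - a s) * DX ^ 2 / A s
       + 1 / 2 * lsum (fun k => rho k * gam k * Lf ^ 2) B
       + 1 / 2 * lsum (fun k => rho k * gam k * LgX ^ 2) NN) ->
  B <> nil /\
  (INR (length B) >= INR (N - s + 1) / 2 \/
   lsum (fun k => rho k * (f (x k) - f xstar)) B < 0).
Proof.
  intros HXc HXcomp Hfc Hfl HDc Hgc Hgl HgD Hxs Hgxs Hopt Hfs Hgs Hgrad Hcont Hsc HMV HMVex HDX
    test h HN Hx1 Halg Hmuf Hmug HL Hfsc Hgsc HVL a A rho HaA Hs I B NN Hmin.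
  assert (Hin : forall y, X y -> inRn n y) by apply HXcomp.
  assert (Hxk : forall k, (1 <= k <= S N)%nat -> X (x k)).
  { induction k; intros Hk; [lia|].
    destruct (Nat.eq_dec k 0) as [->|Hk0]; [exact Hx1|].
    destruct (Halg k ltac:(lia)) as [_ [_ [_ [HX _]]]]. exact HX. }
  assert (HMV0 : 0 <= MV).
  { pose proof (HMV xstar xstar Hxs Hxs) as H0. unfold bregman in H0.
    rewrite inner_sub_r in H0. lra. }
  assert (HDX2 : DX ^ 2 = MV) by (rewrite HDX; apply pow2_sqrt; auto).
  set (V := fun k => bregman n omega gomega (x k) xstar).
  set (E := fun k => if test k then f (x k) - f xstar else eta k).
  set (C := fun k => if test k then Lf ^ 2 else LgX ^ 2).
  assert (Hper : forall k, (1 <= k <= N)%nat ->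
     gam k * E k <= (1 - a k) * V k - V (S k) + gam k ^ 2 * C k / 2).
  { intros k Hk. destruct (Halg k Hk) as [Hdl [Het [Hga Hpr]]].
    assert (Xk : X (x k)) by (apply Hxk; lia).
    pose proof (step n X omega gomega (x k) (vscale (gam k) (h k)) (x (S k)) xstar
                  Hin HXc Hsc Hgrad Xk Hxs Hpr) as St.
    rewrite inner_scal_l, inner_scal_l, inner_scal_r in St.
    pose proof (HVL (x k) xstar Xk Hxs) as HVb. rewrite vnorm_subsym in HVb.
    set (r2 := vnorm n (vsub xstar (x k)) ^ 2) in *.
    assert (Hr2 : 0 <= r2) by (unfold r2; pose proof (vnorm_pos n (vsub xstar (x k))); nra).
    unfold E, C, a, V. unfold h in St.
    destruct (test k) eqn:Ht.
    - pose proof (subgrad_bound n f (x k) (fsub (x k)) Lf (Hin _ Xk) (Hfs _ Xk) Hfl) as Hb.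
      pose proof (Hfsc xstar (x k) Hxs Xk) as Hsf. fold r2 in Hsf.
      assert (Hip : inner n (fsub (x k)) (vsub (x k) xstar) = - inner n (fsub (x k)) (vsub xstar (x k)))
        by (rewrite !inner_sub_r; ring).
      assert (H1 : mu_f * gam k / L * bregman n omega gomega (x k) xstar <= mu_f * gam k / L * (L/2*r2)).
      { apply Rmult_le_compat_l; [|exact HVb]. apply Rlt_le, Rdiv_lt_0_compat; nra. }
      assert (H2 : mu_f * gam k / L * (L/2*r2) = gam k * (mu_f / 2 * r2)) by (field; lra).
      assert (H3 : gam k * (gam k * inner n (fsub (x k)) (fsub (x k))) <= gam k * (gam k * Lf ^ 2)).
      { apply Rmult_le_compat_l; [lra|]. apply Rmult_le_compat_l; lra. }
      assert (H4 : gam k * (f (x k) - f xstar) <= gam k * (inner n (fsub (x k)) (vsub (x k) xstar) - mu_f/2*r2)).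
      { apply Rmult_le_compat_l; lra. }
      nra.
    - apply Rleb_false in Ht.
      pose proof (subgrad_bound n (fun z => g z (dl k)) (x k) (gsub (x k) (dl k)) LgX (Hin _ Xk)
                    (Hgs _ _ Xk Hdl) (Hgl _ Hdl)) as Hb.
      pose proof (Hgsc (dl k) xstar (x k) Hdl Hxs Xk) as Hsf. fold r2 in Hsf.
      pose proof (Hgxs (dl k) Hdl) as Hg0.
      assert (Hip : inner n (gsub (x k) (dl k)) (vsub (x k) xstar) = - inner n (gsub (x k) (dl k)) (vsub xstar (x k)))
        by (rewrite !inner_sub_r; ring).
      assert (H1 : mu_g * gam k / L * bregman n omega gomega (x k) xstar <= mu_g * gam k / L * (L/2*r2)).
      { apply Rmult_le_compat_l; [|exact HVb]. apply Rlt_le, Rdiv_lt_0_compat; nra. }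
      assert (H2 : mu_g * gam k / L * (L/2*r2) = gam k * (mu_g / 2 * r2)) by (field; lra).
      assert (H3 : gam k * (gam k * inner n (gsub (x k) (dl k)) (gsub (x k) (dl k))) <= gam k * (gam k * LgX ^ 2)).
      { apply Rmult_le_compat_l; [lra|]. apply Rmult_le_compat_l; lra. }
      assert (H4 : gam k * eta k <= gam k * (inner n (gsub (x k) (dl k)) (vsub (x k) xstar) - mu_g/2*r2)).
      { apply Rmult_le_compat_l; lra. }
      nra. }
  set (T := fun k => rho k * E k).
  set (Q := fun k => 1/2 * (rho k * gam k * C k)).
  assert (Hper2 : forall k, (1 <= k <= N)%nat ->
     T k <= (1 - a k) * V k / A k - V (S k) / A k + Q k).
  { intros k Hk. destruct (HaA k Hk) as [Ha HA]. pose proof (Hper k Hk) as P.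
    unfold T, Q, rho.
    replace (gam k / A k * E k) with ((gam k * E k) * / A k) by (field; lra).
    replace ((1 - a k) * V k / A k - V (S k) / A k + 1 / 2 * (gam k / A k * gam k * C k))
      with (((1 - a k) * V k - V (S k) + gam k ^ 2 * C k / 2) * / A k) by (field; lra).
    apply Rmult_le_compat_r; [left; apply Rinv_0_lt_compat; lra|exact P]. }
  set (W := fun j => V (S j) / A j).
  set (Z := (1 - a s) * V s / A s).
  assert (Htel : lsum T (seq s (S (N - s))) <= Z - W (s + (N - s))%nat + lsum Q (seq s (S (N - s)))).
  { apply tele.
    - unfold Z, W. apply Hper2. lia.
    - intros k Hk. pose proof (Hper2 k ltac:(lia)) as P.
      destruct (HaA k ltac:(lia)) as [Ha HA]. destruct (HaA (k-1)%nat ltac:(lia)) as [Ha' HA'].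
      assert (HAk : A k = (1 - a k) * A (k-1)%nat).
      { unfold A. replace k with (S (k-1)) at 1 2 by lia. apply Aseq_S. lia. }
      assert (Hnz : 1 - a k <> 0) by (intro E0; rewrite E0 in HAk; lra).
      unfold W. replace (S (k-1)) with k by lia.
      replace ((1 - a k) * V k / A k) with (V k / A (k-1)%nat) in P
        by (rewrite HAk; field; split; lra).
      exact P. }
  replace (s + (N - s))%nat with N in Htel by lia.
  replace (S (N - s)) with (N - s + 1)%nat in Htel by lia.
  fold I in Htel.
  assert (HW : 0 <= W N).
  { unfold W, V. destruct (HaA N ltac:(lia)) as [_ HA].
    pose proof (breg_sc n X omega gomega (x (S N)) xstar Hin HXc Hsc (Hxk (S N) ltac:(lia)) Hxs
                  (Hgrad _ (Hxk (S N) ltac:(lia)))) as Hb.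
    pose proof (inner_pos n (vsub xstar (x (S N)))).
    apply Rmult_le_pos; [lra|]. left; apply Rinv_0_lt_compat; lra. }
  assert (HZ : Z <= (1 - a s) * DX ^ 2 / A s).
  { unfold Z. destruct (HaA s ltac:(lia)) as [Ha HA]. rewrite HDX2.
    pose proof (HMV (x s) xstar (Hxk s ltac:(lia)) Hxs) as Hv.
    unfold Rdiv. apply Rmult_le_compat_r; [left; apply Rinv_0_lt_compat; lra|].
    apply Rmult_le_compat_l; [lra|exact Hv]. }
  assert (HsT : lsum T I = lsum (fun k => rho k * (f (x k) - f xstar)) B
                         + lsum (fun k => rho k * eta k) NN).
  { rewrite (lsum_split test T I). unfold B, NN. f_equal; apply lsum_filter_ext; intros k Hk;
      unfold T, E.
    - rewrite Hk; reflexivity.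
    - destruct (test k); [discriminate|reflexivity]. }
  assert (HsQ : lsum Q I = 1 / 2 * lsum (fun k => rho k * gam k * Lf ^ 2) B
                         + 1 / 2 * lsum (fun k => rho k * gam k * LgX ^ 2) NN).
  { rewrite (lsum_split test Q I). unfold B, NN. rewrite <- !lsum_scal.
    f_equal; apply lsum_filter_ext; intros k Hk; unfold Q, C.
    - rewrite Hk; reflexivity.
    - destruct (test k); [discriminate|reflexivity]. }
  set (Rb := (1 - a s) * DX ^ 2 / A s
       + 1 / 2 * lsum (fun k => rho k * gam k * Lf ^ 2) B
       + 1 / 2 * lsum (fun k => rho k * gam k * LgX ^ 2) NN) in *.
  assert (Key : lsum (fun k => rho k * (f (x k) - f xstar)) B + lsum (fun k => rho k * eta k) NN <= Rb)
    by (unfold Rb; lra).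
  set (c := ((N - s + 2) / 2)%nat) in *.
  assert (Hlen : (length B + length NN = N - s + 1)%nat).
  { unfold B, NN. rewrite filter_length. unfold I. apply length_seq. }
  assert (Sel : (c <= length NN)%nat -> lsum (fun k => rho k * eta k) NN > Rb).
  { intros Hc.
    assert (HNI : forall k, In k NN -> (s <= k <= N)%nat).
    { intros k Hk. unfold NN in Hk. apply filter_In in Hk. destruct Hk as [Hk _].
      unfold I in Hk. apply in_seq in Hk. lia. }
    specialize (Hmin (firstn c NN)).
    assert (Hle : lsum (fun k => rho k * eta k) (firstn c NN) <= lsum (fun k => rho k * eta k) NN).
    { rewrite <- (firstn_skipn c NN) at 2. rewrite lsum_app.
      assert (0 <= lsum (fun k => rho k * eta k) (skipn c NN)); [|lra].
      apply lsum_nonneg. intros k Hk. apply In_skipn' in Hk. specialize (HNI k Hk).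
      destruct (HaA k ltac:(lia)) as [_ HA]. destruct (Halg k ltac:(lia)) as [_ [He [Hg _]]].
      unfold rho. apply Rmult_le_pos; [|lra]. apply Rlt_le, Rdiv_lt_0_compat; lra. }
    assert (lsum (fun k => rho k * eta k) (firstn c NN) > Rb); [|lra].
    apply Hmin.
    - apply NoDup_firstn'. unfold NN. apply NoDup_filter. apply seq_NoDup.
    - intros k Hk. apply In_firstn' in Hk. unfold NN in Hk. apply filter_In in Hk. tauto.
    - apply firstn_length_le. exact Hc. }
  split.
  - intros HB.
    assert (HB0 : length B = 0%nat) by (rewrite HB; reflexivity).
    assert (Hc : (c <= length NN)%nat).
    { unfold c. apply Nat.div_le_upper_bound; lia. }
    specialize (Sel Hc). rewrite HB in Key. simpl in Key. lra.
  - destruct (Rle_lt_dec (INR (N - s + 1) / 2) (INR (length B))) as [Hge|Hlt].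
    + left. lra.
    + right.
      assert (Hlt2 : (2 * length B < N - s + 1)%nat).
      { apply INR_lt. rewrite mult_INR. simpl (INR 2). lra. }
      assert (Hc : (c <= length NN)%nat).
      { unfold c. apply Nat.div_le_upper_bound; lia. }
      specialize (Sel Hc). lra.
Qed.
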